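(* Let $M$ be a monoid and let $\sigma : X^* \to M$ and $\tau : Y^* \to M$ be finite monoid choices of generators. Then $L_\sigma(M)$ is an inverse morphic image of $L_\tau(M)$, i.e. there is a monoid morphism $\rho : \hat{X}^* \to \hat{Y}^*$ with $L_\sigma(M) = \{w \in \hat{X}^* : w\rho \in L_\tau(M)\}$. The corresponding statement holds for a semigroup $S$ with finite semigroup choices of generators $\sigma : X^+ \to S$ and $\tau : Y^+ \to S$.
   Context: Maps are written on the right. $X^*$, $X^+$: free monoid and free semigroup on $X$. For a monoid $M$ and surjective monoid morphism $\sigma : X^* \to M$, let $\overline{X} = \{\overline{x} : x \in X\}$ be new symbols, $\hat{X} = X \cup \overline{X}$; the loop automaton has vertex set $M$, for each $a \in M$, $x \in X$ an edge $a \to a(x\sigma)$ labelled $x$ and an edge $a(x\sigma) \to a$ labelled $\overline{x}$; the loop problem $L_\sigma(M) \subseteq \hat{X}^*$ is the set of labels of paths from the identity to the identity. For a semigroup $S$ and surjective morphism $\sigma : X^+ \to S$, $L_\sigma(S)$ is the loop problem of $S^1$ ($S$ with a new identity adjoined, even if one exists) with respect to the unique extension $\sigma^1 : X^* \to S^1$. *)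

(* Defs.v *)
From mathcomp Require Import all_boot.
Set Implicit Arguments. Unset Strict Implicit. Unset Printing Implicit Defensive.

Definition is_monoid (M : Type) (mul : M -> M -> M) (e : M) : Prop :=
  [/\ forall a b c, mul a (mul b c) = mul (mul a b) c,
      forall a, mul e a = a & forall a, mul a e = a].

Definition is_semigroup (S : Type) (mul : S -> S -> S) : Prop :=
  forall a b c, mul a (mul b c) = mul (mul a b) c.

Definition free_monoid_morph (X M : Type) (mul : M -> M -> M) (e : M)
  (s : seq X -> M) : Prop :=
  s [::] = e /\ forall u v, s (u ++ v) = mul (s u) (s v).

(* Semigroup morphism from the free semigroup X^+ (nonempty words);
   the value of [s] on the empty word is irrelevant. *)
Definition free_semigroup_morph (X S : Type) (mul : S -> S -> S)
  (s : seq X -> S) : Prop :=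
  forall u v : seq X, 0 < size u -> 0 < size v -> s (u ++ v) = mul (s u) (s v).

(* hat X = X + Xbar : [inl x] is x, [inr x] is xbar. *)
Definition hat (X : Type) := (X + X)%type.

(* Paths in the loop automaton of monoid (M, mul, e) w.r.t. generator
   images [g x = x sigma]: edges a --x--> a (x sigma) and
   a (x sigma) --xbar--> a.  [lpath a w b] : some path from a to b has label w. *)
Fixpoint lpath (X M : Type) (mul : M -> M -> M) (g : X -> M)
  (a : M) (w : seq (hat X)) (b : M) : Prop :=
  match w with
  | [::] => a = b
  | inl x :: w' => lpath mul g (mul a (g x)) w' b
  | inr x :: w' => exists c, mul c (g x) = a /\ lpath mul g c w' b
  end.

Definition loop_problem (X M : Type) (mul : M -> M -> M) (e : M)
  (s : seq X -> M) (w : seq (hat X)) : Prop :=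
  lpath mul (fun x => s [:: x]) e w e.

(* S^1 : S with a new identity adjoined (None). *)
Definition mul1 (S : Type) (mul : S -> S -> S) (a b : option S) : option S :=
  match a, b with
  | None, _ => b
  | _, None => a
  | Some x, Some y => Some (mul x y)
  end.

Definition ext1 (X S : Type) (s : seq X -> S) (w : seq X) : option S :=
  if w is [::] then None else Some (s w).

Definition sg_loop_problem (X S : Type) (mul : S -> S -> S)
  (s : seq X -> S) (w : seq (hat X)) : Prop :=
  loop_problem (mul1 mul) None (ext1 s) w.

(* Main.v *)
Require Import Defs.
From mathcomp Require Import all_boot.
From Stdlib Require Import ClassicalEpsilon.
Set Implicit Arguments.

Section Loop.
Variables (M : Type) (mul : M -> M -> M) (e : M).
Hypothesis hM : is_monoid mul e.

Lemma lpath_cat (Y : Type) (g : Y -> M) p q a b :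
  lpath mul g a (p ++ q) b <-> exists c, lpath mul g a p c /\ lpath mul g c q b.
Proof.
elim: p a => [|[x|x] p IH] a /=.
- split; [by exists a | by case=> c [-> ]].
- exact: IH.
- split.
  + case=> c1 [H1 /IH [c [H2 H3]]]; exists c; split=> //; exists c1; done.
  + case=> c [[c1 [H1 H2]] H3]; exists c1; split=> //; apply/IH; exists c; done.
Qed.

Variables (Y : Type) (t : seq Y -> M).
Hypothesis ht : free_monoid_morph mul e t.

Lemma t_cons y u : t (y :: u) = mul (t [:: y]) (t u).
Proof. by case: ht => _ H; rewrite -H. Qed.

Lemma lpath_inl u a c :
  lpath mul (fun y => t [:: y]) a (map inl u) c <-> c = mul a (t u).
Proof.
have := hM; rewrite /is_monoid => -[A L R].
elim: u a => [|y u IH] a /=.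
- by case: ht => -> _; rewrite R; split=> H; rewrite H.
- by rewrite IH (t_cons y u) A.
Qed.

Lemma lpath_inr u a c :
  lpath mul (fun y => t [:: y]) a (rev (map inr u)) c <-> mul c (t u) = a.
Proof.
have := hM; rewrite /is_monoid => -[A L R].
elim/last_ind: u a => [|u y IH] a /=.
- by case: ht => -> _; rewrite R; split=> H; rewrite H.
- rewrite map_rcons rev_rcons /= -cats1; case: ht => _ ->.
  split.
  + by case=> c1 [<- /IH <-]; rewrite A.
  + by move=> <-; exists (mul c (t u)); split; [rewrite A | apply/IH].
Qed.

End Loop.

Lemma monoid_case (M : Type) (mul : M -> M -> M) (e : M) :
     is_monoid mul e ->
     forall (X Y : Type) (s : seq X -> M) (t : seq Y -> M),
       free_monoid_morph mul e s -> 
       free_monoid_morph mul e t -> (forall m : M, exists w, t w = m) ->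
       exists rho : seq (hat X) -> seq (hat Y),
         free_monoid_morph (@cat (hat Y)) [::] rho /\
         forall w : seq (hat X),
           loop_problem mul e s w <-> loop_problem mul e t (rho w).
Proof.
move=> hM X Y s t hs ht tsurj.
pose u x := proj1_sig (constructive_indefinite_description _ (tsurj (s [:: x]))).
have hu x : t (u x) = s [:: x].
  by rewrite /u; case: constructive_indefinite_description.
pose f (z : hat X) : seq (hat Y) :=
  match z with inl x => map inl (u x) | inr x => rev (map inr (u x)) end.
exists (fun w => flatten (map f w)); split.
  by split=> // a b; rewrite map_cat flatten_cat.
suff H : forall w a b, lpath mul (fun x => s [:: x]) a w b <->
   lpath mul (fun y => t [:: y]) a (flatten (map f w)) b by move=> w; apply: H.
elim=> [|[x|x] w IH] a b //=.
- rewrite lpath_cat IH; split.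
  + by move=> H; exists (mul a (t (u x))); split; [apply/(lpath_inl hM ht) | rewrite hu].
  + by case=> c [/(lpath_inl hM ht) -> H]; rewrite -hu.
- rewrite lpath_cat; split.
  + case=> c [H1 /IH H2]; exists c; split=> //; apply/(lpath_inr hM ht); rewrite hu.
    done.
  + case=> c [/(lpath_inr hM ht) H1 /IH H2]; exists c; rewrite -hu; done.
Qed.

Theorem proposition4p6 :
  (forall (M : Type) (mul : M -> M -> M) (e : M),
     is_monoid mul e ->
     forall (X Y : finType) (s : seq X -> M) (t : seq Y -> M),
       free_monoid_morph mul e s -> (forall m : M, exists w, s w = m) ->
       free_monoid_morph mul e t -> (forall m : M, exists w, t w = m) ->
       exists rho : seq (hat X) -> seq (hat Y),
         free_monoid_morph (@cat (hat Y)) [::] rho /\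
         forall w : seq (hat X),
           loop_problem mul e s w <-> loop_problem mul e t (rho w))
  /\
  (forall (S : Type) (mul : S -> S -> S),
     is_semigroup mul ->
     forall (X Y : finType) (s : seq X -> S) (t : seq Y -> S),
       free_semigroup_morph mul s ->
       (forall a : S, exists w, 0 < size w /\ s w = a) ->
       free_semigroup_morph mul t ->
       (forall a : S, exists w, 0 < size w /\ t w = a) ->
       exists rho : seq (hat X) -> seq (hat Y),
         free_monoid_morph (@cat (hat Y)) [::] rho /\
         forall w : seq (hat X),
           sg_loop_problem mul s w <-> sg_loop_problem mul t (rho w)).
Proof.
split.
  move=> M mul e hM X Y s t hs _ ht tsurj; exact: monoid_case.
move=> S mul hS X Y s t hs _ ht tsurj.
have hM : is_monoid (mul1 mul) None.
  split; first by case=> [a|] [b|] [c|] //=; rewrite hS.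
  by case. by case.
have ext (Z : Type) (r : seq Z -> S) : free_semigroup_morph mul r ->
    free_monoid_morph (mul1 mul) None (ext1 r).
  move=> hr; split=> // [[|a u] [|b v]] //=; first by rewrite cats0.
  by rewrite -hr.
rewrite /sg_loop_problem; apply: (monoid_case hM (ext _ _ hs) (ext _ _ ht)).
case=> [a|]; last by exists [::].
by case: (tsurj a) => [[|y w] [//= _ <-]]; exists (y :: w).
Qed.
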